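(* For all integers $N\ge 2$ and $1\le k\le N-1$, $$\mathbb{E}[\mathcal{N}_k(N)]=\frac{N}{k(k+1)},$$ while $\mathcal{N}_N(N)=1$ (the vertex $v_1$ is the unique vertex of degree $N$).
   Context: A random recursive hypergraph (RRH) is the random hypergraph process defined as follows. At size $N=1$ it has vertex set $\{v_1\}$ and edge set $\{\{v_1\}\}$. Given the hypergraph of size $N$ (vertices $v_1,\dots,v_N$, exactly $N$ edges), one chooses an existing edge $e$ uniformly at random, independently of the past, and adds a new vertex $v_{N+1}$ together with the new edge $e\cup\{v_{N+1}\}$. The degree of a vertex is the number of edges containing it. $\mathcal{N}_k(N)$ denotes the number of vertices of degree $k$ in the RRH of size $N$. *)

(* Defs.v *)
From mathcomp Require Import all_boot all_order all_algebra.
Set Implicit Arguments. Unset Strict Implicit. Unset Printing Implicit Defensive.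
Import GRing.Theory Num.Theory.

(* Vertices v_1, ..., v_N are encoded as the naturals 0, ..., N-1
   (v_{i+1} is encoded as i).  A hypergraph is the sequence of its edges
   (in order of creation), each edge being a seq of vertices. *)

Definition rrh_init : seq (seq nat) := [:: [:: 0%N]].

Definition rrh_step (E : seq (seq nat)) (j : nat) : seq (seq nat) :=
  rcons E (rcons (nth [::] E j) (size E)).

Definition rrh (s : seq nat) : seq (seq nat) := foldl rrh_step rrh_init s.

(* Sample space for the RRH of size N: the i-th step (from size i+1 to
   size i+2, i = 0..N-2) chooses one of the i+1 existing edges, uniformly and
   independently; an outcome is thus a dependent finite function. *)
Definition outcome (N : nat) := {dffun forall i : 'I_N.-1, 'I_i.+1}.

Definition choices_of (N : nat) (f : outcome N) : seq nat :=
  [seq nat_of_ord (f i) | i <- enum 'I_N.-1].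

Definition rrh_of (N : nat) (f : outcome N) : seq (seq nat) :=
  rrh (choices_of f).

Definition degree (E : seq (seq nat)) (v : nat) : nat :=
  count (fun e => v \in e) E.

Definition Ncount (N : nat) (E : seq (seq nat)) (k : nat) : nat :=
  count (fun v => degree E v == k) (iota 0 N).

Definition ENk (N k : nat) : rat :=
  (\sum_(f : outcome N) (Ncount N (rrh_of f) k)%:R) / (#|outcome N|)%:R.

(* Main.v *)
Require Import Defs.
From mathcomp Require Import all_boot all_order all_algebra.
From mathcomp Require Import zify ring.

Lemma count_sum (T : Type) (a : pred T) (s : seq T) :
  count a s = \sum_(x <- s) (a x : nat).
Proof. by elim: s => [|x s IH]; rewrite ?big_nil ?big_cons //= IH. Qed.

Lemma degree_rcons E e v : degree (rcons E e) v = degree E v + (v \in e).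
Proof. by rewrite /degree -cats1 count_cat /= addn0. Qed.

Definition wfv (E : seq (seq nat)) := all (fun e => all (fun v => v < size E) e) E.

Lemma degree_out E : wfv E -> degree E (size E) = 0.
Proof.
move=> /allP H; apply/eqP; rewrite /degree -leqn0 leqNgt -has_count.
apply/hasP => -[e eE me]; have /allP/(_ _ me) := H e eE.
by rewrite ltnn.
Qed.

Lemma wfv_step E j : wfv E -> wfv (rrh_step E j).
Proof.
move=> /allP H; apply/allP => e; rewrite /rrh_step size_rcons mem_rcons inE.
case/orP => [/eqP -> | eE].
  apply/allP => v; rewrite mem_rcons inE => /orP [/eqP -> //|].
  case: (ltnP j (size E)) => hj; last by rewrite nth_default.
  have /allP := H _ (mem_nth [::] hj) => H2 /H2; exact: ltnW.
by apply/allP => v /(allP (H _ eE)) /ltnW.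
Qed.

Lemma wfv_rrh s : wfv (rrh s).
Proof.
rewrite /rrh; elim/last_ind: s => [|s x IH]; first by [].
by rewrite foldl_rcons; apply: wfv_step.
Qed.

Lemma size_rrh s : size (rrh s) = (size s).+1.
Proof.
rewrite /rrh; elim/last_ind: s => [|s x IH]; first by [].
by rewrite foldl_rcons /rrh_step size_rcons IH size_rcons.
Qed.

Lemma degree_step_lt E j v : v < size E ->
  degree (rrh_step E j) v = degree E v + (v \in nth [::] E j).
Proof.
move=> hv; rewrite /rrh_step degree_rcons mem_rcons inE.
by rewrite (ltn_eqF hv).
Qed.

Lemma degree_step_new E j : wfv E -> degree (rrh_step E j) (size E) = 1.
Proof.
move=> w; by rewrite /rrh_step degree_rcons degree_out // mem_rcons inE eqxx.
Qed.

Lemma sum_pred (E : seq (seq nat)) (p : pred (seq nat)) a k :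
  \sum_(e <- E) ((a + p e) == k : nat) =
  count p E * (a.+1 == k) + (size E - count p E) * (a == k).
Proof.
elim: E => [|e E IH]; first by rewrite big_nil.
rewrite big_cons IH /=; case: (p e) => /=.
  by rewrite addn1 mulSn addnA.
rewrite addn0 add0n subSn ?count_size // mulSn; lia.
Qed.

Lemma step_sum E k : wfv E -> 0 < k ->
  \sum_(j < size E) Ncount (size E).+1 (rrh_step E j) k =
  (k.-1) * Ncount (size E) E k.-1 + (size E - k) * Ncount (size E) E k
  + size E * (k == 1).
Proof.
move=> w hk; set m := size E.
have e1 : forall j, Ncount m.+1 (rrh_step E j) k =
   \sum_(v <- iota 0 m) ((degree E v + (v \in nth [::] E j)) == k : nat)
   + (k == 1).
  move=> j; rewrite /Ncount -addn1 iotaD count_cat /= add0n addn0.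
  rewrite degree_step_new // [1 == k]eq_sym; congr (_ + _).
  rewrite count_sum big_seq [RHS]big_seq; apply: eq_bigr => v.
  by rewrite mem_iota add0n => /degree_step_lt ->.
rewrite (eq_bigr _ (fun (j : 'I_m) _ => e1 j)) big_split /= sum_nat_const card_ord.
rewrite exchange_big /=.
have e2 : forall v, \sum_(j < m) ((degree E v + (v \in nth [::] E j)) == k : nat)
  = \sum_(e <- E) ((degree E v + (v \in e)) == k : nat).
  move=> v; rewrite (big_nth [::]) big_mkord //.
rewrite (eq_bigr _ (fun v _ => e2 v)).
rewrite (eq_bigr (fun v => (k.-1) * (degree E v == k.-1) + (m - k) * (degree E v == k)));
  last first.
  move=> v _; rewrite sum_pred -/(degree E v) -/m.
  clear e1 e2; case: k hk => // k _ /=; rewrite eqSS; congr (_ + _).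
  by case: eqP => [->|]; rewrite ?muln0 ?muln1.
  by case: eqP => [->|]; rewrite ?muln0 ?muln1.
rewrite big_split /= -!big_distrr /= /Ncount !count_sum; lia.
Qed.

Fixpoint all_choices (n : nat) : seq (seq nat) :=
  match n with
  | 0 => [:: [::]]
  | n'.+1 => [seq rcons s j | s <- all_choices n', j <- iota 0 n'.+1]
  end.

Lemma all_choicesS n :
  all_choices n.+1 = [seq rcons s j | s <- all_choices n, j <- iota 0 n.+1].
Proof. by []. Qed.

Definition good n (s : seq nat) :=
  (size s == n) && all (fun i => nth 0 s i <= i) (iota 0 n).

Lemma good_rcons n s j : good n.+1 (rcons s j) = good n s && (j <= n).
Proof.
rewrite /good size_rcons eqSS -addn1 iotaD all_cat /= andbT add0n.
case: (eqVneq (size s) n) => [<-|] //=.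
rewrite nth_rcons ltnn eqxx /=; congr andb.
apply: eq_in_all => i; rewrite mem_iota add0n => hi.
move: hi => /andP [_ hi]; by rewrite nth_rcons hi.
Qed.

Lemma mem_all_choices n s : (s \in all_choices n) = good n s.
Proof.
elim: n s => [|n IH] s.
  by case: s => [|x s] //=; rewrite inE.
case/lastP: s => [|s j].
  have -> : good n.+1 [::] = false by [].
  rewrite all_choicesS; apply/negbTE/negP => /allpairsP [[a b] [_ _ /= h]].
  by move: h; case: a.
rewrite good_rcons all_choicesS; apply/allpairsP/andP.
  move=> [[a b] [/= ha hb h]].
  move: (h) => /(congr1 (@rev nat)); rewrite !rev_rcons => -[hj hs].
  move: hs => /(congr1 (@rev nat)); rewrite !revK => hs; subst.
  split; first by rewrite -IH.
  by move: hb; rewrite -[0 :: _]/(iota 0 n.+1) mem_iota.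
move=> [gs hj]; exists (s, j); split => //; first by rewrite IH.
by rewrite mem_iota.
Qed.

Lemma uniq_all_choices n : uniq (all_choices n).
Proof.
elim: n => [|n IH] //; rewrite all_choicesS; apply: allpairs_uniq => //; first exact: iota_uniq.
move=> [a b] [c d] _ _ /= h.
move: (h) => /(congr1 (@rev nat)); rewrite !rev_rcons => -[-> /(congr1 (@rev nat))].
by rewrite !revK => ->.
Qed.

Lemma choices_nth N (f : outcome N) (i : 'I_N.-1) :
  nth 0 (choices_of f) i = f i.
Proof.
rewrite /choices_of (nth_map i) ?size_enum_ord //.
by have -> : nth i (enum 'I_N.-1) i = i by apply: val_inj; rewrite /= nth_enum_ord.
Qed.

Lemma size_choices N (f : outcome N) : size (choices_of f) = N.-1.
Proof. by rewrite size_map size_enum_ord. Qed.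

Lemma choices_inj N : injective (@choices_of N).
Proof.
move=> f g h; apply/ffunP => i; apply: val_inj.
by rewrite /= -(choices_nth _ f) -(choices_nth _ g) h.
Qed.

Lemma perm_choices N :
  perm_eq [seq choices_of f | f <- enum (outcome N)] (all_choices N.-1).
Proof.
apply: uniq_perm; first by rewrite map_inj_uniq ?enum_uniq //; exact: choices_inj.
  exact: uniq_all_choices.
move=> s; rewrite mem_all_choices; apply/mapP/idP.
  move=> [f _ ->]; rewrite /good size_choices eqxx /=.
  apply/allP => i; rewrite mem_iota add0n leq0n /= => hi.
  by rewrite (choices_nth _ f (Ordinal hi)) /= -ltnS.
move=> /andP [/eqP hs /allP ha].
exists ([ffun i : 'I_N.-1 => (inord (nth 0 s i) : 'I_i.+1)]); first by rewrite mem_enum.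
apply: (@eq_from_nth _ 0); first by rewrite size_choices.
move=> i; rewrite hs => hi.
rewrite (choices_nth _ _ (Ordinal hi)) ffunE /= inordK //.
by rewrite ltnS ha // mem_iota add0n leq0n.
Qed.

Lemma sum_outcome (R : Type) (idx : R) (op : Monoid.com_law idx) N (F : seq nat -> R) :
  \big[op/idx]_(f : outcome N) F (choices_of f) =
  \big[op/idx]_(s <- all_choices N.-1) F s.
Proof.
rewrite -(perm_big _ (perm_choices N)) big_map.
by rewrite -[LHS]big_enum.
Qed.
Lemma size_of_mem n s : s \in all_choices n -> size s = n.
Proof. by rewrite mem_all_choices => /andP [/eqP]. Qed.

Definition T n k := \sum_(s <- all_choices n) Ncount n.+1 (rrh s) k.


Lemma card_choices n : \sum_(s <- all_choices n) 1 = n`!.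
Proof.
elim: n => [|n IH]; first by rewrite big_cons big_nil.
rewrite all_choicesS big_allpairs_dep.
rewrite (eq_bigr (fun _ => n.+1)); last by move=> s _; rewrite sum1_size size_iota.
rewrite factS -IH big_distrr /=; apply: eq_bigr => s _; by rewrite muln1.
Qed.

Lemma sum_const_mul (r : seq (seq nat)) c :
  \sum_(i <- r) c = c * \sum_(i <- r) 1.
Proof. elim: r => [|x r IH]; rewrite ?big_nil ?muln0 // !big_cons IH; lia. Qed.

Lemma T_rec n k : 0 < k ->
  T n.+1 k = k.-1 * T n k.-1 + (n.+1 - k) * T n k + n.+1 * (k == 1) * n`!.
Proof.
move=> hk; rewrite /T all_choicesS big_allpairs_dep.
transitivity (\sum_(s <- all_choices n) (k.-1 * Ncount n.+1 (rrh s) k.-1 +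
   (n.+1 - k) * Ncount n.+1 (rrh s) k + n.+1 * (k == 1))).
  rewrite big_seq [RHS]big_seq; apply: eq_bigr => s /size_of_mem hs.
  have e : size (rrh s) = n.+1 by rewrite size_rrh hs.
  rewrite -[n.+1 in RHS]e -step_sum //; last exact: wfv_rrh.
  rewrite -(big_mkord xpredT (fun j => Ncount (size (rrh s)).+1 (rrh_step (rrh s) j) k)).
  rewrite /index_iota subn0 e; apply: eq_bigr => j _.
  by rewrite /rrh foldl_rcons.
rewrite big_split big_split -!big_distrr; congr (_ + _).
by rewrite -card_choices (sum_const_mul _ (k == 1)) /= mulnA.
Qed.

Lemma T_main n :
  (forall k, 0 < k <= n -> k * k.+1 * T n k = n`! * n.+1) /\ T n n.+1 = n`!.
Proof.
elim: n => [|n [IH1 IH2]].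
  split; first by move=> k; case: k => // k /andP [] _; rewrite ltn0.
  by rewrite /T /= big_cons big_nil.
split.
  move=> k /andP [hk0 hkn]; rewrite T_rec //.
  case: (ltngtP k n.+1) => [hlt|hgt|->]; last first.
  - rewrite subnn mul0n addn0 /=.
    case: n IH1 IH2 hkn => [|n] IH1 IH2 _; first by [].
    have h0 : 0 < n.+1 <= n.+1 by rewrite leqnn.
    have := IH1 n.+1 h0; rewrite /= muln0 addn0 => h.
    transitivity (n.+3 * (n.+1 * n.+2 * T n.+1 n.+1)); first ring.
    by rewrite h [(n.+2)`!]factS; ring.
  - by move: hkn; rewrite leqNgt hgt.
  case: k hk0 hkn hlt => // -[|k] _ hkn hlt.
    rewrite /= mul0n add0n muln1 subn1 /=.
    case: n IH1 IH2 hkn hlt => [|n] IH1 IH2 hkn hlt; first by rewrite /=.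
    have := IH1 1 isT => h.
    transitivity (n.+1 * (1 * 2 * T n.+1 1) + 2 * n.+2 * (n.+1)`!); first ring.
    by rewrite h [(n.+2)`!]factS; ring.
  rewrite /= muln0 addn0.
  have h1 := IH1 k.+1 (ltnW hlt).
  have h2 := IH1 k.+2 hlt.
  move: h1 h2; rewrite factS.
  move: (T n k.+1) (T n k.+2) => t1 t2; move: (n`!) => F.
  have [d ->] : exists d, n = k.+2 + d by exists (n - k.+2); rewrite subnKC.
  have -> : (k.+2 + d).+1 - k.+2 = d.+1 by lia.
  move=> h1 h2.
  transitivity (k.+3 * (k.+1 * k.+2 * t1) + d.+1 * (k.+2 * k.+3 * t2)); first ring.
  rewrite h1 h2; ring.
rewrite T_rec //= IH2 factS.
have -> : n.+1 - n.+2 = 0 by lia.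
by rewrite mul0n addn0 muln0 addn0.
Qed.

Definition inv n (E : seq (seq nat)) :=
  all (fun e => 0 \in e) E && all (fun v => degree E v <= n) (iota 1 n).

Lemma inv_rrh n s : s \in all_choices n -> inv n (rrh s).
Proof.
elim: n s => [|n IH] s.
  by rewrite inE => /eqP ->.
case/lastP: s => [|s j].
  by rewrite mem_all_choices.
rewrite mem_all_choices good_rcons -mem_all_choices => /andP [hs hj].
have := IH _ hs; rewrite /rrh foldl_rcons -/(rrh s).
have es : size (rrh s) = n.+1 by rewrite size_rrh (size_of_mem _ _ hs).
have w := wfv_rrh s.
move: (rrh s) es w => E es w /andP [h0 hd].
apply/andP; split.
  rewrite /rrh_step all_rcons h0 andbT mem_rcons inE.
  by apply/orP; right; apply: (allP h0); apply: mem_nth; rewrite es.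
apply/allP => v; rewrite mem_iota add1n ltnS => /andP [v1 vn].
case: (ltngtP v n.+1) => [hv|hv|->]; first last.
- by rewrite -{1}es degree_step_new.
- by move: vn; rewrite leqNgt hv.
rewrite degree_step_lt ?es //.
have := allP hd v; rewrite mem_iota v1 add1n hv => /(_ isT) hdv.
by case: (_ \in _) => /=; lia.
Qed.

Import GRing.Theory Num.Theory.
Local Open Scope ring_scope.

Theorem mainTheorem4 (N : nat) (hN : (2 <= N)%N) :
  (forall k : nat, (1 <= k)%N -> (k <= N - 1)%N ->
     ENk N k = N%:R / (k * k.+1)%:R)
  /\ (forall f : outcome N, Ncount N (rrh_of f) N = 1%N /\ degree (rrh_of f) 0 = N).
Proof.
have eN : N = (N.-1).+1 by rewrite prednK // ltnW.
split.
  move=> k hk1 hkN; rewrite /ENk.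
  have e1 : \sum_(f : outcome N) (Ncount N (rrh_of f) k)%:R = (T N.-1 k)%:R :> rat.
    rewrite /rrh_of (@sum_outcome _ _ _ N (fun s => (Ncount N (rrh s) k)%:R : rat)).
    by rewrite /T natr_sum -eN.
  have e2 : #|outcome N| = N.-1`!.
    rewrite -sum1_card (@sum_outcome _ _ _ N (fun _ => 1%N)) card_choices //.
  rewrite e1 e2.
  have [H1 _] := T_main N.-1.
  have hk : (0 < k <= N.-1)%N by rewrite hk1 -subn1 hkN.
  have h := H1 k hk; rewrite -eN in h.
  apply/eqP; rewrite eqr_div; first last.
  - by rewrite pnatr_eq0 -lt0n muln_gt0 hk1.
  - by rewrite pnatr_eq0 -lt0n fact_gt0.
  by rewrite -!natrM mulnC h mulnC.
move=> f; rewrite /rrh_of.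
have hm : choices_of f \in all_choices N.-1.
  by rewrite -(perm_mem (perm_choices N)) map_f // mem_enum.
have /andP [h0 hd] := inv_rrh _ _ hm.
have es : size (rrh (choices_of f)) = N by rewrite size_rrh (size_choices _ f) -eN.
have d0 : degree (rrh (choices_of f)) 0 = N.
  by rewrite /degree; move: h0; rewrite all_count es => /eqP.
split=> //.
move: (rrh (choices_of f)) es d0 hd => E es d0 hd.
rewrite /Ncount.
have -> : iota 0 N = 0%N :: iota 1 N.-1 by rewrite {1}eN.
rewrite /= d0 eqxx add1n; congr S.
apply/eqP; rewrite -leqn0 leqNgt -has_count; apply/hasP => -[v hv /eqP hdv].
have := allP hd v hv; rewrite hdv.
by rewrite {1}eN ltnn.
Qed.
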